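(* Let $n\ge3$, $\rho>0$, and let $h$ be a smooth function on $[0,\rho)$ such that $$F(x,y)=\sqrt{(1+|\overline{x}|^2)|\overline{y}|^2+\langle\overline{x},\overline{y}\rangle^2+e^{x^0}(y^0)^2}+h(|\overline{x}|)\langle\overline{x},\overline{y}\rangle$$ is a Finsler metric on $\mathbb{R}\times\mathbb{B}^n(\rho)$ (for instance $h(r)=\frac{k}{1+r^2}$ with $|k|<2$). Then $F$ is a cylindrically symmetric Finsler metric with vanishing Douglas curvature.
   Context: Points $x=(x^0,\overline{x})\in\mathbb{R}\times\mathbb{B}^n(\rho)$, tangent vectors $y=(y^0,\overline{y})$, $|\cdot|,\langle\cdot,\cdot\rangle$ Euclidean on $\mathbb{R}^n$. A Finsler metric $F$ is cylindrically symmetric if $F((x^0,O\overline{x}),(y^0,O\overline{y}))=F((x^0,\overline{x}),(y^0,\overline{y}))$ for all $O\in O(n)$. The Douglas curvature is $D^A_{BCD}=\frac{\partial^3}{\partial y^B\partial y^C\partial y^D}\big(G^A-\frac{1}{n+2}\sum_{E=0}^n\frac{\partial G^E}{\partial y^E}y^A\big)$, $A,B,C,D\in\{0,\dots,n\}$, where $G^A=\frac14g^{AB}\{[F^2]_{x^Cy^B}y^C-[F^2]_{x^B}\}$ are the geodesic coefficients ($g_{AB}=\frac12[F^2]_{y^Ay^B}$, summation convention). *)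

(* Defs.v *)
From HB Require Import structures.
From mathcomp Require Import all_boot all_order all_algebra.
From mathcomp Require Import all_classical all_reals all_analysis.
Set Implicit Arguments. Unset Strict Implicit. Unset Printing Implicit Defensive.
Import Order.TTheory GRing.Theory Num.Theory.
Import numFieldNormedType.Exports.
Local Open Scope ring_scope.
Local Open Scope classical_set_scope.

Section Defs.
Variable R : realType.

Definition evec N (i : 'I_N) : 'rV[R]_N := delta_mx 0 i.

(* a partial derivative of a function F(x,y) on R^N x R^N:
   inl i = d/dx^i, inr i = d/dy^i *)
Definition pd N (d : ('I_N + 'I_N)%type) (f : 'rV[R]_N -> 'rV[R]_N -> R)
  : 'rV[R]_N -> 'rV[R]_N -> R :=
  fun x y => match d with
  | inl i => (fun t : R => f (x + t *: evec i) y)^`() 0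
  | inr i => (fun t : R => f x (y + t *: evec i))^`() 0
  end.

Definition pdiff N (s : seq ('I_N + 'I_N)%type) f := foldr (@pd N) f s.

Definition smooth_on N (W : set ('rV[R]_N * 'rV[R]_N))
  (f : 'rV[R]_N -> 'rV[R]_N -> R) :=
  forall s : seq ('I_N + 'I_N)%type,
    forall p, W p ->
      {for p, continuous (fun q : 'rV[R]_N * 'rV[R]_N => pdiff s f q.1 q.2)} /\
      forall d : ('I_N + 'I_N)%type,
        derivable (fun t : R => match d with
                     | inl i => pdiff s f (p.1 + t *: evec i) p.2
                     | inr i => pdiff s f p.1 (p.2 + t *: evec i) end) 0 1.

Definition Fsq N (F : 'rV[R]_N -> 'rV[R]_N -> R) := fun x y => F x y ^+ 2.

Definition fund_g N (F : 'rV[R]_N -> 'rV[R]_N -> R) x y : 'M[R]_N :=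
  \matrix_(A, B) (2^-1 * pd (inr A) (pd (inr B) (Fsq F)) x y).

Definition posdef N (M : 'M[R]_N) :=
  forall v : 'rV[R]_N, v != 0 -> 0 < (v *m M *m v^T) 0 0.

Definition Finsler_on N (U : set 'rV[R]_N) (F : 'rV[R]_N -> 'rV[R]_N -> R) :=
  [/\ smooth_on [set p | U p.1 /\ p.2 != 0] F,
      (forall x y, U x -> 0 <= F x y),
      (forall x y (l : R), U x -> 0 < l -> F x (l *: y) = l * F x y) &
      (forall x y, U x -> y != 0 -> posdef (fund_g F x y))].

Definition geod N (F : 'rV[R]_N -> 'rV[R]_N -> R) (A : 'I_N) x y : R :=
  4^-1 * \sum_(B < N) (invmx (fund_g F x y)) A B *
    (\sum_(C < N) pd (inl C) (pd (inr B) (Fsq F)) x y * y 0 C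
       - pd (inl B) (Fsq F) x y).

(* Douglas curvature D^A_{BCD}; here N = dimension, so 1/(N+1) *)
Definition douglas N (F : 'rV[R]_N -> 'rV[R]_N -> R) (A B C D : 'I_N) x y : R :=
  let H := fun x y : 'rV[R]_N =>
    geod F A x y
    - (N.+1%:R)^-1 * (\sum_(E < N) pd (inr E) (geod F E) x y) * y 0 A in
  pd (inr B) (pd (inr C) (pd (inr D) H)) x y.

Definition x0 n (x : 'rV[R]_(1 + n)) : R := lsubmx x 0 0.
Definition xbar n (x : 'rV[R]_(1 + n)) : 'rV[R]_n := rsubmx x.

Definition dot n (u v : 'rV[R]_n) : R := (u *m v^T) 0 0.
Definition enorm n (u : 'rV[R]_n) : R := Num.sqrt (dot u u).

Definition orthogonal_mx n (O : 'M[R]_n) := O^T *m O = 1%:M.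

Definition cyl_sym n (U : set 'rV[R]_(1 + n)) (F : 'rV[R]_(1 + n) -> 'rV[R]_(1 + n) -> R) :=
  forall O : 'M[R]_n, orthogonal_mx O -> forall x y : 'rV[R]_(1 + n), U x ->
    F (row_mx (lsubmx x) (xbar x *m O^T)) (row_mx (lsubmx y) (xbar y *m O^T))
    = F x y.

Definition cyl_domain (n : nat) (rho : R) : set 'rV[R]_(1 + n) :=
  [set x | enorm (xbar x) < rho].

(* smooth on [0,rho): restriction of a C^infinity function on an open interval *)
Definition smooth_Ico (h : R -> R) (rho : R) :=
  exists g : R -> R, exists e : R, [/\ 0 < e,
    (forall r, 0 <= r < rho -> g r = h r) &
    (forall (k : nat) r, - e < r < rho ->
        derivable (iter k (fun f : R -> R => f^`()) g) r 1)].

Definition Fex n (h : R -> R) (x y : 'rV[R]_(1 + n)) : R :=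
  Num.sqrt ((1 + enorm (xbar x) ^+ 2) * enorm (xbar y) ^+ 2
            + dot (xbar x) (xbar y) ^+ 2 + expR (x0 x) * x0 y ^+ 2)
  + h (enorm (xbar x)) * dot (xbar x) (xbar y).

End Defs.
Arguments cyl_domain {R} n rho.

(* Main.v *)
Require Import Defs.
From HB Require Import structures.
From mathcomp Require Import all_boot all_order all_algebra.
From mathcomp Require Import all_classical all_reals all_analysis.
From mathcomp Require Import ring lra.
Import Order.TTheory GRing.Theory Num.Theory.
Import numFieldNormedType.Exports.
Local Open Scope ring_scope.

Set Implicit Arguments. Unset Strict Implicit. Unset Printing Implicit Defensive.

Section A.
Variable R : realType.

Lemma dotE m (u v : 'rV[R]_m) : dot u v = \sum_i u 0 i * v 0 i.
Proof. by rewrite /dot mxE; apply: eq_bigr => i _; rewrite mxE. Qed.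

Lemma dotC m (u v : 'rV[R]_m) : dot u v = dot v u.
Proof. by rewrite !dotE; apply: eq_bigr => i _; rewrite mulrC. Qed.

Lemma dotDl m (u v w : 'rV[R]_m) : dot (u + v) w = dot u w + dot v w.
Proof. by rewrite !dotE -big_split; apply: eq_bigr => i _; rewrite mxE mulrDl. Qed.

Lemma dotZl m a (u w : 'rV[R]_m) : dot (a *: u) w = a * dot u w.
Proof. by rewrite !dotE mulr_sumr; apply: eq_bigr => i _; rewrite mxE mulrA. Qed.

Lemma dotDr m (u v w : 'rV[R]_m) : dot w (u + v) = dot w u + dot w v.
Proof. by rewrite dotC dotDl !(dotC w). Qed.

Lemma dotZr m a (u w : 'rV[R]_m) : dot w (a *: u) = a * dot w u.
Proof. by rewrite dotC dotZl dotC. Qed.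

Lemma dot0l m (u : 'rV[R]_m) : dot 0 u = 0.
Proof. by rewrite dotE big1 // => i _; rewrite mxE mul0r. Qed.

Lemma dot0r m (u : 'rV[R]_m) : dot u 0 = 0.
Proof. by rewrite dotC dot0l. Qed.

Lemma dot_ge0 m (u : 'rV[R]_m) : 0 <= dot u u.
Proof. by rewrite dotE sumr_ge0 // => i _; rewrite -expr2 sqr_ge0. Qed.

Lemma dot_gt0 m (u : 'rV[R]_m) : u != 0 -> 0 < dot u u.
Proof.
move=> u0; rewrite lt_def dot_ge0 andbT; apply: contra u0 => /eqP.
rewrite dotE => /eqP; rewrite psumr_eq0 => [/allP H|i _]; last by rewrite -expr2 sqr_ge0.
apply/eqP/rowP => i; rewrite mxE.
have := H i (mem_index_enum _); rewrite -expr2 sqrf_eq0 => /eqP ->//.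
Qed.

Lemma enorm_sq m (u : 'rV[R]_m) : enorm u ^+ 2 = dot u u.
Proof. by rewrite /enorm sqr_sqrtr // dot_ge0. Qed.

Lemma enorm_ge0 m (u : 'rV[R]_m) : 0 <= enorm u.
Proof. exact: sqrtr_ge0. Qed.

Variable n : nat.
Local Notation V := 'rV[R]_(1 + n).

Lemma x0D (u v : V) : x0 (u + v) = x0 u + x0 v.
Proof. by rewrite /x0 !mxE. Qed.
Lemma x0Z a (u : V) : x0 (a *: u) = a * x0 u.
Proof. by rewrite /x0 !mxE. Qed.
Lemma x00 : x0 (0 : V) = 0.
Proof. by rewrite /x0 !mxE. Qed.
Lemma xbarD (u v : V) : xbar (u + v) = xbar u + xbar v.
Proof. by apply/rowP => i; rewrite /xbar !mxE. Qed.
Lemma xbarZ a (u : V) : xbar (a *: u) = a *: xbar u.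
Proof. by apply/rowP => i; rewrite /xbar !mxE. Qed.
Lemma xbar0 : xbar (0 : V) = 0.
Proof. by apply/rowP => i; rewrite /xbar !mxE. Qed.

Definition qf (x u v : V) : R :=
  (1 + dot (xbar x) (xbar x)) * dot (xbar u) (xbar v)
  + dot (xbar x) (xbar u) * dot (xbar x) (xbar v)
  + expR (x0 x) * (x0 u * x0 v).

Lemma qfC x u v : qf x u v = qf x v u.
Proof. by rewrite /qf (dotC (xbar u)); ring. Qed.

Lemma qfDl x u v w : qf x (u + v) w = qf x u w + qf x v w.
Proof. rewrite /qf xbarD x0D !dotDl !dotDr; ring. Qed.

Lemma qfZl x a u w : qf x (a *: u) w = a * qf x u w.
Proof. rewrite /qf xbarZ x0Z !dotZl !dotZr; ring. Qed.

Lemma qfDr x u v w : qf x w (u + v) = qf x w u + qf x w v.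
Proof. by rewrite qfC qfDl !(qfC _ w). Qed.

Lemma qfZr x a u w : qf x w (a *: u) = a * qf x w u.
Proof. by rewrite qfC qfZl qfC. Qed.

Lemma vec_split (y : V) : y != 0 -> x0 y != 0 \/ xbar y != 0.
Proof.
move=> y0; case: (eqVneq (x0 y) 0) => [h|]; last by left.
right; apply: contra y0 => /eqP yb; apply/eqP.
rewrite -[y]hsubmxK; rewrite /xbar in yb; rewrite yb.
have -> : lsubmx y = 0 by apply/rowP => i; rewrite ord1 [RHS]mxE; rewrite /x0 in h; rewrite h.
by rewrite row_mx0.
Qed.

Lemma qf_gt0 x y : y != 0 -> 0 < qf x y y.
Proof.
move=> y0; rewrite /qf.
have h1 := dot_ge0 (xbar x); have h2 := dot_ge0 (xbar y).
have h3 : 0 <= dot (xbar x) (xbar y) * dot (xbar x) (xbar y) by rewrite -expr2 sqr_ge0.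
have h4 : 0 < expR (x0 x) := expR_gt0 _.
case: (vec_split y0) => [hy|hy].
- have : 0 < x0 y * x0 y by rewrite -expr2 lt_def sqr_ge0 sqrf_eq0 hy.
  move=> hh. have := mulr_gt0 h4 hh. have := mulr_ge0 (addr_ge0 ler01 h1) h2. lra.
- have := dot_gt0 hy => hh.
  have : 0 < (1 + dot (xbar x) (xbar x)) * dot (xbar y) (xbar y).
    by apply: mulr_gt0 => //; lra.
  have : 0 <= expR (x0 x) * (x0 y * x0 y) by apply: mulr_ge0; [lra| rewrite -expr2 sqr_ge0].
  lra.
Qed.

Lemma FexE (h : R -> R) x y :
  Fex h x y = Num.sqrt (qf x y y) + h (enorm (xbar x)) * dot (xbar x) (xbar y).
Proof. by rewrite /Fex /qf !enorm_sq !expr2. Qed.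

End A.

Lemma dot_orth (R : realType) m (O : 'M[R]_m) (u v : 'rV[R]_m) :
  orthogonal_mx O -> dot (u *m O^T) (v *m O^T) = dot u v.
Proof.
rewrite /orthogonal_mx /dot => hO.
by rewrite trmx_mul trmxK mulmxA -(mulmxA u) hO mulmx1.
Qed.

Lemma cyl_Fex (R : realType) n rho (h : R -> R) : cyl_sym (cyl_domain n rho) (Fex h).
Proof.
move=> O hO x y _.
have xb : forall (a : 'rV[R]_1) (b : 'rV[R]_n), xbar (row_mx a b) = b.
  by move=> a b; rewrite /xbar row_mxKr.
have x0r : forall (a : 'rV[R]_1) (b : 'rV[R]_n), x0 (row_mx a b) = a 0 0.
  by move=> a b; rewrite /x0 row_mxKl.
rewrite /Fex !xb !x0r /enorm !dot_orth //.
Qed.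

Section Der.
Variable R : realType.
Implicit Types (f g : R -> R) (t a b : R).

Lemma dC t a : is_derive t (1:R) (fun _ : R => a) 0.
Proof. exact: is_derive_cst. Qed.
Lemma dId t : is_derive t (1:R) (fun s : R => s) 1.
Proof. exact: is_derive_id. Qed.
Lemma dD f g t a b : is_derive t 1 f a -> is_derive t 1 g b ->
  is_derive t (1:R) (fun s => f s + g s) (a + b).
Proof. move=> H1 H2; exact: (is_deriveD H1 H2). Qed.
Lemma dB f g t a b : is_derive t 1 f a -> is_derive t 1 g b ->
  is_derive t (1:R) (fun s => f s - g s) (a - b).
Proof. move=> H1 H2; exact: (is_deriveB H1 H2). Qed.
Lemma dM f g t a b : is_derive t 1 f a -> is_derive t 1 g b ->
  is_derive t (1:R) (fun s => f s * g s) (f t * b + g t * a).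
Proof. move=> H1 H2; exact: (is_deriveM H1 H2). Qed.
Lemma dV f t a : f t != 0 -> is_derive t 1 f a ->
  is_derive t (1:R) (fun s => (f s)^-1) (- (f t)^-2 * a).
Proof. move=> H1 H2; exact: (is_deriveV H1 H2). Qed.
Lemma dcomp f g t a b : is_derive (g t) 1 f a -> is_derive t 1 g b ->
  is_derive t (1:R) (fun s => f (g s)) (a * b).
Proof. move=> H1 H2; exact: (is_derive1_comp H1 H2). Qed.
Lemma dsqrt g t b : 0 < g t -> is_derive t 1 g b ->
  is_derive t (1:R) (fun s => Num.sqrt (g s)) (b / (2 * Num.sqrt (g t))).
Proof.
move=> H1 H2; apply: is_derive_eq; first exact: (dcomp (is_derive1_sqrt H1) H2).
by rewrite mulrC.
Qed.
Lemma dexp g t b : is_derive t 1 g b ->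
  is_derive t (1:R) (fun s => expR (g s)) (expR (g t) * b).
Proof. move=> H2; exact: (dcomp (is_derive_expR _) H2). Qed.
Lemma dext f g t a : (forall s, f s = g s) -> is_derive t 1 f a -> is_derive t (1:R) g a.
Proof. by move=> /funext ->. Qed.
Lemma dnear f g t a : (\forall s \near t, f s = g s) -> is_derive t 1 f a -> is_derive t (1:R) g a.
Proof. by move=> H; apply: near_eq_is_derive. Qed.
Lemma dval f t a : is_derive t 1 f a -> derive1 f t = a.
Proof. by move=> H; rewrite derive1E; apply: derive_val. Qed.

Lemma dpoly2 (a b c : R) : is_derive 0 (1:R) (fun t => a + t * b + t ^+ 2 * c) b.
Proof.
eapply is_derive_eq.
  eapply dD; first eapply dD; first exact: dC.
    by eapply dM; [exact: dId| exact: dC].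
  eapply dM; last exact: dC.
  eapply (@dext (fun s => s * s)); first by move=> s; rewrite -expr2.
  by eapply dM; exact: dId.
rewrite /=; ring.
Qed.
End Der.

Unset Implicit Arguments. Set Strict Implicit.
Local Open Scope classical_set_scope.

Lemma dcont {R : realType} {f : R -> R} {t a : R} : is_derive t 1 f a -> f x @[x --> t] --> f t.
Proof. by case=> H _; apply/differentiable_continuous/derivable1_diffP. Qed.

Section D.
Variable R : realType.
Variable n : nat.
Local Notation V := 'rV[R]_(1 + n).
Variable h : R -> R.
Local Notation ev := (evec R).

Definition al (x y : V) := Num.sqrt (qf x y y).
Definition be (x u : V) := h (enorm (xbar x)) * dot (xbar x) (xbar u).
Definition Fy (x y e : V) := qf x y e / al x y + be x e.
Definition Fyy (x y e e' : V) := qf x e e' / al x y - qf x y e' * qf x y e / al x y ^+ 3.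

Lemma FexE' (x y : V) : Fex h x y = al x y + be x y.
Proof. by rewrite FexE. Qed.

Lemma al_gt0 (x y : V) : y != 0 -> 0 < al x y.
Proof. by move=> y0; rewrite /al sqrtr_gt0 qf_gt0. Qed.

Lemma al_sq (x y : V) : al x y ^+ 2 = qf x y y.
Proof.
rewrite /al sqr_sqrtr //; case: (eqVneq y 0) => [->|y0]; last exact/ltW/qf_gt0.
by rewrite /qf xbar0 x00 !(dot0l, dot0r, mulr0, mul0r, addr0).
Qed.

Lemma near_y (y e : V) : y != 0 -> \forall t \near (0:R), y + t *: e != 0.
Proof.
move=> y0.
have [i hi] : exists i, y 0 i != 0.
  apply: contrapT => H; move/negP: y0; apply; apply/eqP/rowP => i; rewrite mxE.
  by apply/eqP; apply: contrapT => hi; apply: H; exists i; apply/negP.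
have D : is_derive (0:R) 1 (fun t : R => y 0 i + t * e 0 i) (e 0 i).
  eapply is_derive_eq; first by eapply dD; [exact: dC| eapply dM; [exact: dId | exact: dC]].
  by rewrite /= !mulr0 mulr1 !add0r.
have := cvgr_neq0 _ (dcont D); rewrite /= mul0r addr0 => /(_ _ hi).
apply: filterS => t ft; apply/negP => /eqP E; move/negP: ft; apply.
by have := congr1 (fun M : V => M 0 i) E; rewrite !mxE => ->.
Qed.

Lemma qf_lin_t (x y e v : V) (t : R) : qf x (y + t *: e) v = qf x y v + t * qf x e v.
Proof. by rewrite qfDl qfZl. Qed.

Lemma qf_quad_t (x y e : V) (t : R) :
  qf x (y + t *: e) (y + t *: e) = qf x y y + t * (2 * qf x y e) + t ^+ 2 * qf x e e.
Proof. rewrite !qfDl !qfDr !qfZl !qfZr (qfC x e y); ring. Qed.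

Lemma be_lin_t (x y e : V) (t : R) : be x (y + t *: e) = be x y + t * be x e.
Proof. rewrite /be xbarD xbarZ dotDr dotZr; ring. Qed.

Lemma dlin (a b : R) : is_derive (0:R) 1 (fun t : R => a + t * b) b.
Proof.
eapply is_derive_eq; first by eapply dD; [exact: dC| eapply dM; [exact: dId | exact: dC]].
by rewrite /= !mulr0 mulr1 !add0r.
Qed.

Lemma D_qf_y (x y e : V) : is_derive (0:R) 1 (fun t => qf x (y + t *: e) (y + t *: e)) (2 * qf x y e).
Proof. apply: (dext _ (dpoly2 (qf x y y) (2 * qf x y e) (qf x e e))) => t; by rewrite qf_quad_t. Qed.

Lemma D_qfl_y (x y e v : V) : is_derive (0:R) 1 (fun t => qf x (y + t *: e) v) (qf x e v).
Proof. apply: (dext _ (dlin (qf x y v) (qf x e v))) => t; by rewrite qf_lin_t. Qed.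

Lemma D_be_y (x y e : V) : is_derive (0:R) 1 (fun t => be x (y + t *: e)) (be x e).
Proof. apply: (dext _ (dlin (be x y) (be x e))) => t; by rewrite be_lin_t. Qed.

Lemma D_al_y (x y e : V) : y != 0 ->
  is_derive (0:R) 1 (fun t => al x (y + t *: e)) (qf x y e / al x y).
Proof.
move=> y0; have hq := qf_gt0 x y0.
have hq' : 0 < qf x (y + 0 *: e) (y + 0 *: e) by rewrite scale0r addr0.
eapply is_derive_eq; first exact: (@dsqrt _ (fun t => qf x (y + t *: e) (y + t *: e)) 0 _ hq' (D_qf_y x y e)).
rewrite /= scale0r addr0 -/(al x y); have := al_gt0 x y y0 => ha.
by field; rewrite gt_eqF.
Qed.

Lemma D_F_y (x y e : V) : y != 0 ->
  is_derive (0:R) 1 (fun t => Fex h x (y + t *: e)) (Fy x y e).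
Proof.
move=> y0; eapply dext; first by move=> t; rewrite FexE'.
eapply dD; [exact (D_al_y _ _ e y0)| exact (D_be_y _ _ _)].
Qed.

Lemma D_L_y (x y e : V) : y != 0 ->
  is_derive (0:R) 1 (fun t => Fsq (Fex h) x (y + t *: e)) (2 * Fex h x y * Fy x y e).
Proof.
move=> y0; eapply is_derive_eq.
  eapply dext; first by move=> t; rewrite /Fsq expr2.
  exact: (dM (D_F_y _ _ e y0) (D_F_y _ _ e y0)).
by rewrite /= scale0r addr0; ring.
Qed.

Lemma P1 (x y : V) B : y != 0 ->
  pd (inr B) (Fsq (Fex h)) x y = 2 * Fex h x y * Fy x y (ev B).
Proof. by move=> y0; apply: dval; exact: D_L_y. Qed.

Lemma D_Fy_y (x y e e' : V) : y != 0 ->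
  is_derive (0:R) 1 (fun t => Fy x (y + t *: e) e') (Fyy x y e e').
Proof.
move=> y0; have ha := al_gt0 x y y0.
have ha' : al x (y + 0 *: e) != 0 by rewrite scale0r addr0 gt_eqF.
eapply is_derive_eq.
  eapply dD; last exact: dC.
  eapply dM; first exact: D_qfl_y.
  exact: (@dV _ (fun t => al x (y + t *: e)) 0 _ ha' (D_al_y _ _ e y0)).
rewrite /Fyy /= scale0r !addr0.
by field; rewrite gt_eqF.
Qed.

Lemma P3 (x y : V) A B : y != 0 ->
  pd (inr A) (pd (inr B) (Fsq (Fex h))) x y =
  2 * (Fy x y (ev A) * Fy x y (ev B) + Fex h x y * Fyy x y (ev A) (ev B)).
Proof.
move=> y0; apply: dval.
eapply dnear.
  have := near_y y (ev A) y0; apply: filterS => t yt.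
  by rewrite (P1 x _ B yt); reflexivity.
eapply is_derive_eq.
  eapply dM; last exact (D_Fy_y _ _ _ _ y0).
  eapply dM; first exact: dC.
  exact (D_F_y _ _ _ y0).
by rewrite /= scale0r addr0; ring.
Qed.

Definition dqf (x e u v : V) : R :=
  2 * dot (xbar x) (xbar e) * dot (xbar u) (xbar v)
  + (dot (xbar e) (xbar u) * dot (xbar x) (xbar v) + dot (xbar x) (xbar u) * dot (xbar e) (xbar v))
  + expR (x0 x) * x0 e * (x0 u * x0 v).

Lemma dot_quad_t (a b : 'rV[R]_n) (t : R) :
  dot (a + t *: b) (a + t *: b) = dot a a + t * (2 * dot a b) + t ^+ 2 * dot b b.
Proof. rewrite !dotDl !dotDr !dotZl !dotZr (dotC b a); ring. Qed.

Lemma D_dotsq (a b : 'rV[R]_n) :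
  is_derive (0:R) 1 (fun t => dot (a + t *: b) (a + t *: b)) (2 * dot a b).
Proof. apply: (dext _ (dpoly2 (dot a a) (2 * dot a b) (dot b b))) => t; by rewrite dot_quad_t. Qed.

Lemma D_dotl (a b w : 'rV[R]_n) : is_derive (0:R) 1 (fun t => dot (a + t *: b) w) (dot b w).
Proof. apply: (dext _ (dlin (dot a w) (dot b w))) => t; by rewrite dotDl dotZl. Qed.

Lemma D_qf_x (x e u v : V) : is_derive (0:R) 1 (fun t => qf (x + t *: e) u v) (dqf x e u v).
Proof.
eapply (@dext _ (fun t => (1 + dot (xbar x + t *: xbar e) (xbar x + t *: xbar e)) * dot (xbar u) (xbar v)
  + dot (xbar x + t *: xbar e) (xbar u) * dot (xbar x + t *: xbar e) (xbar v)
  + expR (x0 x + t * x0 e) * (x0 u * x0 v))).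
  by move=> t; rewrite /qf xbarD xbarZ x0D x0Z.
eapply is_derive_eq.
  eapply dD; first eapply dD.
  - eapply dM; last exact: dC.
    by eapply dD; [exact: dC | exact (D_dotsq _ _)].
  - by eapply dM; exact (D_dotl _ _ _).
  - eapply dM; last exact: dC.
    by eapply dexp; exact (dlin _ _).
rewrite /dqf /= scale0r !addr0 mul0r addr0; ring.
Qed.

Lemma D_al_x (x e y : V) : y != 0 ->
  is_derive (0:R) 1 (fun t => al (x + t *: e) y) (dqf x e y y / (2 * al x y)).
Proof.
move=> y0; have hq' : 0 < qf (x + 0 *: e) y y by rewrite scale0r addr0 qf_gt0.
eapply is_derive_eq; first exact: (@dsqrt _ (fun t => qf (x + t *: e) y y) 0 _ hq' (D_qf_x x e y y)).
by rewrite /= scale0r addr0.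
Qed.

Variable rho : R.
Hypothesis rho_gt0 : 0 < rho.
Variable g : R -> R.
Variable eps : R.
Hypothesis eps_gt0 : 0 < eps.
Hypothesis hg : forall r, 0 <= r < rho -> g r = h r.
Hypothesis gder : forall r, -eps < r < rho -> derivable g r 1.
Local Notation U := (cyl_domain n rho).

Lemma near_U (x e : V) : U x -> \forall t \near (0:R), U (x + t *: e).
Proof.
rewrite /cyl_domain /= => hx.
have D := D_dotsq (xbar x) (xbar e).
have hr : dot (xbar x) (xbar x) < rho ^+ 2.
  rewrite -enorm_sq; have := enorm_ge0 (xbar x) => h0.
  by rewrite ltr_pXn2r // ?nnegrE // ltW.
have := cvgr_lt _ (dcont D) (rho ^+ 2); rewrite /= scale0r addr0 => /(_ _ hr).
apply: filterS => t ht; rewrite xbarD xbarZ /enorm.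
by rewrite -(gtr0_norm rho_gt0) -sqrtr_sqr ltr_sqrt // exprn_gt0.
Qed.

Definition db (x e : V) (w : 'rV[R]_n) : R :=
  if xbar x == 0 then h 0 * dot (xbar e) w
  else derive1 g (enorm (xbar x)) * (dot (xbar x) (xbar e) / enorm (xbar x)) * dot (xbar x) w
       + h (enorm (xbar x)) * dot (xbar e) w.

Lemma enorm0 : enorm (0 : 'rV[R]_n) = 0.
Proof. by rewrite /enorm dot0l sqrtr0. Qed.

Lemma D_be_x (x e u : V) : U x ->
  is_derive (0:R) 1 (fun t => be (x + t *: e) u) (db x e (xbar u)).
Proof.
move=> hx; have hx' := hx; rewrite /cyl_domain /= in hx'.
have nU := near_U x e hx.
have Hgh : \forall t \near (0:R), g (enorm (xbar (x + t *: e))) = h (enorm (xbar (x + t *: e))).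
  by apply: filterS nU => t ht; apply: hg; rewrite enorm_ge0 ht.
rewrite /db; case: (eqVneq (xbar x) 0) => [xb0|xb0].
- apply/is_derive1_caratheodory.
  exists (fun z => h (enorm (xbar (x + z *: e))) * dot (xbar e) (xbar u)); split.
  + move=> z; rewrite /be.
    have E1 : forall s : R, dot (xbar (x + s *: e)) (xbar u) = s * dot (xbar e) (xbar u).
      by move=> s; rewrite xbarD xbarZ xb0 add0r dotZl.
    rewrite !E1; ring.
  + have Ck : {for 0, continuous (fun z : R => enorm (xbar (x + z *: e)))}.
      apply: (@continuous_comp _ _ _ (fun z : R => dot (xbar (x + z *: e)) (xbar (x + z *: e))) Num.sqrt).
        have D : is_derive (0:R) 1 (fun z : R => dot (xbar (x + z *: e)) (xbar (x + z *: e))) (2 * dot (xbar x) (xbar e)).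
          eapply (@dext _ (fun t => dot (xbar x + t *: xbar e) (xbar x + t *: xbar e))); last exact (D_dotsq _ _).
          by move=> t; rewrite xbarD xbarZ.
        exact: (dcont D).
      exact: sqrt_continuous.
    have k0 : enorm (xbar (x + 0 *: e)) = 0 by rewrite scale0r addr0 xb0 enorm0.
    have Cg : {for enorm (xbar (x + 0 *: e)), continuous g}.
      rewrite k0; apply/differentiable_continuous/derivable1_diffP/gder.
      by rewrite oppr_lt0 eps_gt0 rho_gt0.
    have CG' := cvgZr_tmp (a := dot (xbar e) (xbar u)) (continuous_comp Ck Cg).
    apply: cvg_trans (near_eq_cvg _) _; last first.
      have -> : h (enorm (xbar (x + 0 *: e))) * dot (xbar e) (xbar u)
          = (g \o (fun z : R => enorm (xbar (x + z *: e)))) 0 *: dot (xbar e) (xbar u).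
        by rewrite /= k0 hg // lexx rho_gt0.
      exact: CG'.
    by apply: filterS Hgh => t /= ->.
  + by rewrite scale0r addr0 xb0 enorm0.
- have rpos : 0 < enorm (xbar x) by rewrite /enorm sqrtr_gt0 dot_gt0.
  have Dk : is_derive (0:R) 1 (fun t => enorm (xbar (x + t *: e)))
      (dot (xbar x) (xbar e) / enorm (xbar x)).
    eapply (@dext _ (fun t => Num.sqrt (dot (xbar x + t *: xbar e) (xbar x + t *: xbar e)))).
      by move=> t; rewrite xbarD xbarZ.
    have hp : 0 < dot (xbar x + 0 *: xbar e) (xbar x + 0 *: xbar e) by rewrite scale0r addr0 dot_gt0.
    eapply is_derive_eq.
      exact (@dsqrt _ (fun t => dot (xbar x + t *: xbar e) (xbar x + t *: xbar e)) 0 _ hp (D_dotsq _ _)).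
    rewrite /= scale0r addr0 -/(enorm (xbar x)); field; by rewrite gt_eqF.
  have Dg : is_derive (enorm (xbar (x + 0 *: e))) 1 g (derive1 g (enorm (xbar x))).
    rewrite scale0r addr0 derive1E; apply: derivableP; apply: gder.
    rewrite hx' andbT; apply: (lt_trans _ rpos); by rewrite oppr_lt0.
  have Dh : is_derive (0:R) 1 (fun t => h (enorm (xbar (x + t *: e))))
      (derive1 g (enorm (xbar x)) * (dot (xbar x) (xbar e) / enorm (xbar x))).
    eapply dnear; first exact: Hgh.
    exact (@dcomp _ g (fun t => enorm (xbar (x + t *: e))) 0 _ _ Dg Dk).
  eapply is_derive_eq.
    eapply dM; first exact Dh.
    eapply (@dext _ (fun t => dot (xbar x + t *: xbar e) (xbar u))); last exact (D_dotl _ _ _).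
    by move=> t; rewrite xbarD xbarZ.
  rewrite /= scale0r !addr0; ring.
Qed.

Definition Fx (x y e : V) := dqf x e y y / (2 * al x y) + db x e (xbar y).
Definition Fxy (x y e e' : V) :=
  dqf x e y e' / al x y - qf x y e' * (dqf x e y y / (2 * al x y)) / al x y ^+ 2 + db x e (xbar e').

Lemma D_F_x (x y e : V) : U x -> y != 0 ->
  is_derive (0:R) 1 (fun t => Fex h (x + t *: e) y) (Fx x y e).
Proof.
move=> hx y0; eapply dext; first by move=> t; rewrite FexE'.
eapply dD; [exact (D_al_x _ _ _ y0)| exact (D_be_x _ _ _ hx)].
Qed.

Lemma D_L_x (x y e : V) : U x -> y != 0 ->
  is_derive (0:R) 1 (fun t => Fsq (Fex h) (x + t *: e) y) (2 * Fex h x y * Fx x y e).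
Proof.
move=> hx y0; eapply is_derive_eq.
  eapply dext; first by move=> t; rewrite /Fsq expr2.
  exact: (dM (D_F_x _ _ e hx y0) (D_F_x _ _ e hx y0)).
by rewrite /= scale0r addr0; ring.
Qed.

Lemma P2 (x y : V) B : U x -> y != 0 ->
  pd (inl B) (Fsq (Fex h)) x y = 2 * Fex h x y * Fx x y (ev B).
Proof. by move=> hx y0; apply: dval; exact: D_L_x. Qed.

Lemma D_Fy_x (x y e e' : V) : U x -> y != 0 ->
  is_derive (0:R) 1 (fun t => Fy (x + t *: e) y e') (Fxy x y e e').
Proof.
move=> hx y0; have ha := al_gt0 x y y0.
have ha' : al (x + 0 *: e) y != 0 by rewrite scale0r addr0 gt_eqF.
eapply is_derive_eq.
  eapply dD; last exact (D_be_x _ _ _ hx).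
  eapply dM; first exact (D_qf_x _ _ _ _).
  exact: (@dV _ (fun t => al (x + t *: e) y) 0 _ ha' (D_al_x _ _ _ y0)).
rewrite /Fxy /= scale0r !addr0.
by field; rewrite gt_eqF.
Qed.

Lemma P4 (x y : V) C B : U x -> y != 0 ->
  pd (inl C) (pd (inr B) (Fsq (Fex h))) x y =
  2 * (Fx x y (ev C) * Fy x y (ev B) + Fex h x y * Fxy x y (ev C) (ev B)).
Proof.
move=> hx y0; apply: dval.
eapply dext.
  by move=> t; rewrite (P1 _ _ B y0); reflexivity.
eapply is_derive_eq.
  eapply dM; last exact (D_Fy_x _ _ _ _ hx y0).
  eapply dM; first exact: dC.
  exact (D_F_x _ _ _ hx y0).
by rewrite /= scale0r addr0; ring.
Qed.

End D.

Arguments al {R n}. Arguments be {R n}. Arguments Fy {R n}. Arguments Fyy {R n}.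
Arguments dqf {R n}. Arguments db {R n}. Arguments Fx {R n}. Arguments Fxy {R n}.
Arguments near_y {R n}. Arguments al_gt0 {R n}. Arguments al_sq {R n}. Arguments FexE' {R n}.
Arguments P1 {R n}. Arguments P2 {R n}. Arguments P3 {R n}. Arguments P4 {R n}.
Arguments near_U {R n}. Arguments D_F_y {R n}. Arguments D_be_y {R n}.

Section Gen.
Variable R : realType.

Definition islin {m} (f : 'rV[R]_m -> R) :=
  (forall u v, f (u + v) = f u + f v) /\ (forall a u, f (a *: u) = a * f u).

Lemma lin_exp m (f : 'rV[R]_m -> R) : islin f -> forall u, f u = \sum_i u 0 i * f (evec R i).
Proof.
move=> [fD fZ] u; rewrite {1}(row_sum_delta u).
have f0 : f 0 = 0 by have := fZ 0 0; rewrite scale0r mul0r.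
elim/big_rec2: _ => // i a b _ H; rewrite fD fZ H //.
Qed.

Lemma inv_solve m (M : 'M[R]_m) (z c : 'rV[R]_m) : M \in unitmx ->
  (forall B, \sum_A M B A * z 0 A = c 0 B) -> forall A, \sum_B invmx M A B * c 0 B = z 0 A.
Proof.
move=> Mu H A.
transitivity (\sum_B \sum_j invmx M A B * (M B j * z 0 j)).
  by apply: eq_bigr => B _; rewrite -H mulr_sumr.
rewrite exchange_big /=.
transitivity (\sum_j (invmx M *m M) A j * z 0 j).
  by apply: eq_bigr => j _; rewrite mxE mulr_suml; apply: eq_bigr => i _; rewrite mulrA.
rewrite mulVmx // (bigD1 A) //= big1 => [|j /negPf jA]; last by rewrite mxE eq_sym jA mul0r.
by rewrite mxE eqxx mul1r addr0.
Qed.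

Lemma inv_solve2 m (M : 'M[R]_m) (c : 'rV[R]_m) : M \in unitmx ->
  forall B, \sum_A M B A * (\sum_B' invmx M A B' * c 0 B') = c 0 B.
Proof.
move=> Mu B.
under eq_bigr do rewrite mulr_sumr.
rewrite exchange_big /=.
transitivity (\sum_j (M *m invmx M) B j * c 0 j).
  by apply: eq_bigr => j _; rewrite mxE mulr_suml; apply: eq_bigr => i _; rewrite mulrA.
rewrite mulmxV // (bigD1 B) //= big1 => [|j /negPf jA]; last by rewrite mxE eq_sym jA mul0r.
by rewrite mxE eqxx mul1r addr0.
Qed.

Lemma quadform_E m (M : 'M[R]_m) (v : 'rV[R]_m) :
  (v *m M *m v^T) 0 0 = \sum_j (\sum_i v 0 i * M i j) * v 0 j.
Proof. rewrite mxE; apply: eq_bigr => j _; by rewrite !mxE. Qed.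

Lemma posdef_unit m (M : 'M[R]_m) : posdef M -> M \in unitmx.
Proof.
move=> pM; rewrite unitmxE unitfE; apply/negP => /det0P [v v0 vM].
have := pM v v0; by rewrite vM mul0mx mxE lt_irreflexive.
Qed.
End Gen.
Arguments islin {R m}. Arguments lin_exp {R m}. Arguments inv_solve {R m}.
Arguments inv_solve2 {R m}. Arguments quadform_E {R m}. Arguments posdef_unit {R m}.

Section E.
Variables (R : realType) (n : nat) (h : R -> R) (rho : R) (g : R -> R) (eps : R).
Hypothesis rho_gt0 : 0 < rho.
Hypothesis eps_gt0 : 0 < eps.
Hypothesis hg : forall r, 0 <= r < rho -> g r = h r.
Hypothesis gder : forall r, -eps < r < rho -> derivable g r 1.
Local Notation V := 'rV[R]_(1 + n).
Local Notation ev := (evec R).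
Local Notation U := (cyl_domain n rho).
Local Notation F := (Fex h).
Local Notation L := (Fsq (Fex h)).

Lemma qf_lin2 (x u : V) : islin (qf x u).
Proof. by split=> *; rewrite ?qfDr ?qfZr. Qed.
Lemma qf_lin1 (x v : V) : islin (fun u => qf x u v).
Proof. by split=> *; rewrite ?qfDl ?qfZl. Qed.
Lemma be_lin (x : V) : islin (be h x).
Proof. split=> *; rewrite /be ?xbarD ?xbarZ ?dotDr ?dotZr; ring. Qed.
Lemma dqf_lin1 (x u v : V) : islin (fun e => dqf x e u v).
Proof. split=> *; rewrite /dqf ?xbarD ?xbarZ ?x0D ?x0Z ?dotDr ?dotZr ?dotDl ?dotZl; ring. Qed.
Lemma dqf_lin2 (x e v : V) : islin (fun u => dqf x e u v).
Proof. split=> *; rewrite /dqf ?xbarD ?xbarZ ?x0D ?x0Z ?dotDr ?dotZr ?dotDl ?dotZl; ring. Qed.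
Lemma dqf_lin3 (x e u : V) : islin (fun v => dqf x e u v).
Proof. split=> *; rewrite /dqf ?xbarD ?xbarZ ?x0D ?x0Z ?dotDr ?dotZr ?dotDl ?dotZl; ring. Qed.
Lemma db_lin1 (x : V) w : islin (fun e => db h g x e w).
Proof. split=> *; rewrite /db; case: ifP => _; rewrite ?xbarD ?xbarZ ?dotDr ?dotZr ?dotDl ?dotZl; ring. Qed.
Lemma db_lin2 (x e : V) : islin (fun u => db h g x e (xbar u)).
Proof. split=> *; rewrite /db; case: ifP => _; rewrite ?xbarD ?xbarZ ?dotDr ?dotZr ?dotDl ?dotZl; ring. Qed.
Lemma db_sym (x e e' : V) : db h g x e (xbar e') = db h g x e' (xbar e).
Proof. rewrite /db; case: ifP => _; rewrite ?(dotC (xbar e) (xbar e')); ring. Qed.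
Lemma Fy_lin (x y : V) : islin (Fy h x y).
Proof. split=> *; rewrite /Fy ?qfDr ?qfZr; rewrite ?(proj1 (be_lin x)) ?(proj2 (be_lin x)); ring. Qed.
Lemma Fyy_lin (x y e : V) : islin (Fyy x y e).
Proof. split=> *; rewrite /Fyy ?qfDr ?qfZr; ring. Qed.
Lemma Fx_lin (x y : V) : islin (fun e => Fx h g x y e).
Proof.
split=> *; rewrite /Fx ?(proj1 (dqf_lin1 _ _ _)) ?(proj2 (dqf_lin1 _ _ _))
  ?(proj1 (db_lin1 _ _)) ?(proj2 (db_lin1 _ _)); ring.
Qed.
Lemma Fxy_lin (x y e' : V) : islin (fun e => Fxy h g x y e e').
Proof.
split=> *; rewrite /Fxy ?(proj1 (dqf_lin1 _ _ _)) ?(proj2 (dqf_lin1 _ _ _))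
  ?(proj1 (db_lin1 _ _)) ?(proj2 (db_lin1 _ _)); ring.
Qed.
Lemma Fyy_lin1 (x y e' : V) : islin (fun e => Fyy x y e e').
Proof. split=> *; rewrite /Fyy ?qfDl ?qfZl ?qfDr ?qfZr; ring. Qed.

Lemma sum_comb m (c f k : 'I_m -> R) (a b : R) :
  \sum_i c i * (a * f i + b * k i) = a * \sum_i c i * f i + b * \sum_i c i * k i.
Proof. rewrite !mulr_sumr -big_split /=; apply: eq_bigr => i _; ring. Qed.

Definition aM (x : V) : 'M[R]_(1 + n) := \matrix_(i, j) qf x (ev i) (ev j).

Lemma aM_quad (x v : V) : (v *m aM x *m v^T) 0 0 = qf x v v.
Proof.
rewrite quadform_E (lin_exp _ (qf_lin2 x v) v).
apply: eq_bigr => j _; rewrite mulrC; congr (_ * _).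
rewrite (lin_exp _ (qf_lin1 x (ev j)) v); apply: eq_bigr => i _; by rewrite mxE.
Qed.

Lemma aM_unit (x : V) : aM x \in unitmx.
Proof. by apply: posdef_unit => v v0; rewrite aM_quad qf_gt0. Qed.

Definition wv (x y : V) : V := \row_B (2 * dqf x y y (ev B) - dqf x (ev B) y y).
Definition Ga (x y : V) : V := \row_A (4^-1 * \sum_B invmx (aM x) A B * wv x y 0 B).

Lemma Ga_prop (x y : V) B : qf x (ev B) (Ga x y) = 4^-1 * wv x y 0 B.
Proof.
rewrite (lin_exp _ (qf_lin2 x (ev B)) (Ga x y)).
rewrite -[wv x y 0 B](inv_solve2 _ (wv x y) (aM_unit x) B) mulr_sumr; apply: eq_bigr => A _.
by rewrite !mxE; ring.
Qed.

Lemma Ga_y (x y : V) : qf x y (Ga x y) = 4^-1 * dqf x y y y.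
Proof.
rewrite (lin_exp _ (qf_lin1 x (Ga x y)) y).
under eq_bigr do rewrite Ga_prop mxE.
transitivity (\sum_i (4^-1 * 2) * (y 0 i * dqf x y y (ev i)) - \sum_i 4^-1 * (y 0 i * dqf x (ev i) y y)).
  rewrite -sumrB; apply: eq_bigr => i _; ring.
rewrite -!mulr_sumr -(lin_exp _ (dqf_lin3 _ _ _)) -(lin_exp _ (dqf_lin1 _ _ _)); ring.
Qed.

Definition numf (x y : V) := db h g x y (xbar y) - 2 * be h x (Ga x y).
Definition Pf (x y : V) := numf x y / (2 * F x y).
Definition Gv (x y : V) : V := Ga x y + Pf x y *: y.

Definition vB (x y : V) B := \sum_C pd (inl C) (pd (inr B) L) x y * y 0 C - pd (inl B) L x y.

Lemma fund_gE (x y : V) A B : y != 0 ->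
  fund_g F x y A B = Fy h x y (ev A) * Fy h x y (ev B) + F x y * Fyy x y (ev A) (ev B).
Proof. by move=> y0; rewrite mxE P3 // mulrA mulVf ?mul1r // pnatr_eq0. Qed.

Lemma F_ne0 (x y : V) : y != 0 -> posdef (fund_g F x y) -> F x y != 0.
Proof.
move=> y0 pd0; have H0 := pd0 y y0.
suff : (y *m fund_g F x y *m y^T) 0 0 = F x y * F x y.
  move=> Q; move: H0; rewrite Q; apply: contraTneq => ->; by rewrite mulr0 ltxx.
rewrite quadform_E.
have Fsym : forall e e', Fyy x y e e' = Fyy x y e' e by move=> e e'; rewrite /Fyy qfC; ring.
have E : forall j, \sum_i y 0 i * fund_g F x y i j
    = Fy h x y (ev j) * Fy h x y y + F x y * Fyy x y (ev j) y.
  move=> j; under eq_bigr do rewrite fund_gE // (mulrC (Fy h x y (ev _))) (Fsym (ev _)).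
  by rewrite sum_comb -(lin_exp _ (Fy_lin x y)) -(lin_exp _ (Fyy_lin x y _)).
under eq_bigr do rewrite E.
transitivity (\sum_j y 0 j * (Fy h x y y * Fy h x y (ev j) + F x y * Fyy x y y (ev j))).
  by apply: eq_bigr => j _; rewrite Fsym; ring.
rewrite sum_comb -(lin_exp _ (Fy_lin x y)) -(lin_exp _ (Fyy_lin x y _)).
have hF : Fy h x y y = F x y.
  rewrite /Fy FexE' -al_sq; have := al_gt0 x y y0 => ha; field; by rewrite gt_eqF.
have hFF : Fyy x y y y = 0.
  rewrite /Fyy -al_sq; have := al_gt0 x y y0 => ha; field; by rewrite gt_eqF.
by rewrite hF hFF mulr0 addr0.
Qed.
Lemma key (x y : V) B : U x -> y != 0 -> F x y != 0 ->
  \sum_A fund_g F x y B A * (4 * Gv x y 0 A) = vB x y B.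
Proof.
move=> hx y0 F0.
transitivity (4 * (Fy h x y (ev B) * Fy h x y (Gv x y) + F x y * Fyy x y (ev B) (Gv x y))).
  under eq_bigr do rewrite fund_gE //.
  rewrite (lin_exp _ (Fy_lin x y) (Gv x y)) (lin_exp _ (Fyy_lin x y _) (Gv x y)).
  rewrite !mulr_sumr -big_split /= mulr_sumr; apply: eq_bigr => A _; ring.
have S : \sum_C pd (inl C) (pd (inr B) L) x y * y 0 C
    = 2 * (Fy h x y (ev B) * Fx h g x y y + F x y * Fxy h g x y y (ev B)).
  under eq_bigr do rewrite (P4 h rho rho_gt0 g eps eps_gt0 hg gder) //.
  rewrite (lin_exp _ (Fx_lin x y) y) (lin_exp _ (Fxy_lin x y _) y).
  rewrite !mulr_sumr -big_split /= mulr_sumr; apply: eq_bigr => C _; ring.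
rewrite /vB S (P2 h rho rho_gt0 g eps eps_gt0 hg gder) //.
have ha := al_gt0 x y y0.
have F0' : al x y + be h x y != 0 by rewrite -FexE'.
rewrite /Fy /Fyy /Fx /Fxy /Gv !qfDr !qfZr (proj1 (be_lin x)) (proj2 (be_lin x)).
rewrite Ga_prop Ga_y mxE (db_sym x (ev B) y) (qfC x (ev B) y) -al_sq /Pf /numf FexE'.
by field; rewrite F0' gt_eqF.
Qed.
Lemma geodE (x y : V) A : U x -> y != 0 -> posdef (fund_g F x y) ->
  geod F A x y = Gv x y 0 A.
Proof.
move=> hx y0 pd0.
have F0 := F_ne0 x y y0 pd0.
have := inv_solve (fund_g F x y) (4 *: Gv x y) (\row_B vB x y B) (posdef_unit _ pd0).
move=> /(_ _ A).
have H : forall B, \sum_A0 fund_g F x y B A0 * (4 *: Gv x y) 0 A0 = (\row_B0 vB x y B0) 0 B.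
  move=> B; rewrite [RHS]mxE -(key x y B hx y0 F0); apply: eq_bigr => i _; by rewrite !mxE.
move=> /(_ H) E; rewrite /geod.
transitivity (4^-1 * \sum_B invmx (fund_g F x y) A B * (\row_B0 vB x y B0) 0 B).
  by congr (_ * _); apply: eq_bigr => B _; rewrite mxE.
by rewrite E mxE mulrA mulVf ?mul1r // pnatr_eq0.
Qed.
End E.
Arguments aM {R n}. Arguments wv {R n}. Arguments Ga {R n}. Arguments numf {R n}.
Arguments Pf {R n}. Arguments Gv {R n}. Arguments geodE {R n}. Arguments F_ne0 {R n}.
Arguments qf_lin1 {R n}. Arguments qf_lin2 {R n}. Arguments be_lin {R n}.
Arguments dqf_lin1 {R n}. Arguments dqf_lin2 {R n}. Arguments dqf_lin3 {R n}.
Arguments db_lin1 {R n}. Arguments db_lin2 {R n}. Arguments Fy_lin {R n}.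

Section Bil.
Variable R : realType.
Variable m : nat.
Local Notation W := 'rV[R]_m.

Definition isbil (B : W -> W -> R) := (forall v, islin (fun u => B u v)) /\ (forall u, islin (B u)).

Lemma lin_add (f1 f2 : W -> R) : islin f1 -> islin f2 -> islin (fun u => f1 u + f2 u).
Proof. move=> [a1 b1] [a2 b2]; split=> *; rewrite ?a1 ?a2 ?b1 ?b2; ring. Qed.
Lemma lin_scale (k : R) (f : W -> R) : islin f -> islin (fun u => k * f u).
Proof. move=> [a1 b1]; split=> *; rewrite ?a1 ?b1; ring. Qed.
Lemma lin_mulc (k : R) (f : W -> R) : islin f -> islin (fun u => f u * k).
Proof. move=> [a1 b1]; split=> *; rewrite ?a1 ?b1; ring. Qed.
Lemma lin_sub (f1 f2 : W -> R) : islin f1 -> islin f2 -> islin (fun u => f1 u - f2 u).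
Proof. move=> [a1 b1] [a2 b2]; split=> *; rewrite ?a1 ?a2 ?b1 ?b2; ring. Qed.
Lemma lin_sum k (f : 'I_k -> W -> R) : (forall i, islin (f i)) -> islin (fun u => \sum_i f i u).
Proof.
move=> H; split=> *.
  by rewrite -big_split; apply: eq_bigr => i _; rewrite (proj1 (H i)).
by rewrite mulr_sumr; apply: eq_bigr => i _; rewrite (proj2 (H i)).
Qed.
Lemma lin_coord i : islin (fun u : W => u 0 i).
Proof. by split=> *; rewrite !mxE. Qed.
Lemma lin_cst0 : islin (fun u : W => 0).
Proof. by split=> *; rewrite ?mulr0 ?addr0. Qed.

Lemma D_lin (f : W -> R) (y e : W) : islin f ->
  is_derive (0:R) 1 (fun t => f (y + t *: e)) (f e).
Proof.
move=> [a b]; eapply (@dext _ (fun t => f y + t * f e)); first by move=> t; rewrite a b.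
exact: dlin.
Qed.

Lemma D_bil (B : W -> W -> R) (y e : W) : isbil B ->
  is_derive (0:R) 1 (fun t => B (y + t *: e) (y + t *: e)) (B y e + B e y).
Proof.
move=> [H1 H2].
eapply (@dext _ (fun t => B y y + t * (B y e + B e y) + t ^+ 2 * B e e)); last exact: dpoly2.
move=> t; rewrite (proj1 (H1 _)) (proj2 (H1 _)) !(proj1 (H2 _)) !(proj2 (H2 _)); ring.
Qed.
End Bil.
Arguments isbil {R m}.

Lemma pd_near {R : realType} {n : nat} (f1 f2 : 'rV[R]_(1 + n) -> 'rV[R]_(1 + n) -> R) x y i :
  y != 0 -> (forall y', y' != 0 -> f1 x y' = f2 x y') -> pd (inr i) f1 x y = pd (inr i) f2 x y.
Proof.
move=> y0 H; rewrite /pd !derive1E; apply: near_eq_derive.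
by apply: filterS (near_y y (evec R i) y0) => t yt; exact: H.
Qed.

Section Doug.
Variables (R : realType) (n : nat) (h : R -> R) (rho : R) (g : R -> R) (eps : R).
Hypothesis rho_gt0 : 0 < rho.
Hypothesis eps_gt0 : 0 < eps.
Hypothesis hg : forall r, 0 <= r < rho -> g r = h r.
Hypothesis gder : forall r, -eps < r < rho -> derivable g r 1.
Local Notation V := 'rV[R]_(1 + n).
Local Notation ev := (evec R).
Local Notation U := (cyl_domain n rho).
Local Notation F := (Fex h).
Local Notation L := (Fsq (Fex h)).
Variable x : V.
Hypothesis hx : U x.
Hypothesis hpos : forall y, y != 0 -> posdef (fund_g F x y).

Definition BGa (E : 'I_(1 + n)) (u v : V) :=
  4^-1 * \sum_B invmx (aM x) E B * (2 * dqf x u v (ev B) - dqf x (ev B) u v).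

Lemma BGa_bil E : isbil (BGa E).
Proof.
split=> w.
- apply: lin_scale; apply: lin_sum => B; apply: lin_scale; apply: lin_sub.
    by apply: lin_scale; apply: dqf_lin1.
  exact: dqf_lin2.
- apply: lin_scale; apply: lin_sum => B; apply: lin_scale; apply: lin_sub.
    by apply: lin_scale; apply: dqf_lin2.
  exact: dqf_lin3.
Qed.

Lemma GaE (y : V) E : Ga x y 0 E = BGa E y y.
Proof. rewrite mxE /BGa; congr (_ * _); apply: eq_bigr => B _; by rewrite mxE. Qed.

Definition BN (u v : V) := db h g x u (xbar v) - 2 * \sum_A BGa A u v * be h x (ev A).

Lemma BN_bil : isbil BN.
Proof.
split=> w.
- apply: lin_sub; first exact: db_lin1.
  apply: lin_scale; apply: lin_sum => A; apply: lin_mulc; exact: (proj1 (BGa_bil A)).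
- apply: lin_sub; first exact: db_lin2.
  apply: lin_scale; apply: lin_sum => A; apply: lin_mulc; exact: (proj2 (BGa_bil A)).
Qed.

Lemma numfE (y : V) : numf h g x y = BN y y.
Proof.
rewrite /numf /BN (lin_exp _ (be_lin h x) (Ga x y)); congr (_ - 2 * _).
by apply: eq_bigr => A _; rewrite GaE.
Qed.

Lemma geodE' (y : V) E : y != 0 -> geod F E x y = BGa E y y + Pf h g x y * y 0 E.
Proof.
move=> y0; rewrite (geodE h rho g eps rho_gt0 eps_gt0 hg gder x y E hx y0 (hpos _ y0)).
by rewrite /Gv mxE GaE mxE.
Qed.

Lemma Fy_self (y : V) : y != 0 -> Fy h x y y = F x y.
Proof.
move=> y0; rewrite /Fy FexE' -al_sq; have := al_gt0 x y y0 => ha; field; by rewrite gt_eqF.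
Qed.

Definition dPf (y e : V) :=
  (BN y e + BN e y) * (2 * F x y)^-1 - BN y y * Fy h x y e * (2 * F x y ^+ 2)^-1.

Lemma D_Pf (y : V) e : y != 0 -> is_derive (0:R) 1 (fun t => Pf h g x (y + t *: e)) (dPf y e).
Proof.
move=> y0; have F0 := F_ne0 h x y y0 (hpos _ y0).
have F0' : 2 * F x (y + 0 *: e) != 0 by rewrite scale0r addr0 mulf_neq0 // pnatr_eq0.
eapply (@dext _ (fun t => BN (y + t *: e) (y + t *: e) * (2 * F x (y + t *: e))^-1)).
  by move=> t; rewrite /Pf numfE.
eapply is_derive_eq.
  eapply dM; first exact: (D_bil _ _ _ _ _ BN_bil).
  eapply (@dV _ (fun t => 2 * F x (y + t *: e))); first exact: F0'.
  by eapply dM; [exact: dC| exact (D_F_y h x y e y0)].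
rewrite /dPf /= scale0r addr0.
by field; rewrite F0.
Qed.

Lemma dPf_lin (y : V) : islin (dPf y).
Proof.
apply: lin_sub.
  apply: lin_mulc; apply: lin_add; [exact: (proj2 BN_bil)| exact: (proj1 BN_bil)].
apply: lin_mulc; apply: lin_scale; exact: Fy_lin.
Qed.

Lemma Euler_Pf (y : V) : y != 0 -> \sum_E y 0 E * dPf y (ev E) = Pf h g x y.
Proof.
move=> y0; have F0 := F_ne0 h x y y0 (hpos _ y0).
rewrite -(lin_exp _ (dPf_lin y)) /dPf /Pf numfE Fy_self //.
by field; rewrite F0.
Qed.

Lemma pd_geod (y : V) E : y != 0 -> pd (inr E) (geod F E) x y =
  (BGa E y (ev E) + BGa E (ev E) y) + (Pf h g x y * 1 + y 0 E * dPf y (ev E)).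
Proof.
move=> y0; apply: dval.
eapply dnear.
  apply: filterS (near_y y (ev E) y0) => t yt.
  by rewrite (geodE' _ _ yt); reflexivity.
eapply is_derive_eq.
  eapply dD; first exact: (D_bil _ _ _ _ _ (BGa_bil E)).
  eapply dM; first exact (D_Pf _ (ev E) y0).
  exact (D_lin _ _ _ _ _ (lin_coord _ _ E)).
by rewrite /= scale0r addr0 /evec mxE !eqxx.
Qed.

Definition Q1 (u : V) := \sum_E (BGa E u (ev E) + BGa E (ev E) u).

Lemma S_E (y : V) : y != 0 ->
  \sum_E pd (inr E) (geod F E) x y = Q1 y + ((1 + n).+1)%:R * Pf h g x y.
Proof.
move=> y0; under eq_bigr do rewrite pd_geod //.
rewrite big_split /= -/(Q1 y) big_split /= Euler_Pf // sumr_const card_ord.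
by rewrite mulr1 -mulrSr mulr_natl.
Qed.

Lemma Q1_lin : islin Q1.
Proof.
apply: lin_sum => E; apply: lin_add; [exact: (proj1 (BGa_bil E) (ev E)) | exact: (proj2 (BGa_bil E) (ev E))].
Qed.

Definition Bq (A : 'I_(1 + n)) (u v : V) := BGa A u v - ((1 + n).+1%:R)^-1 * Q1 u * v 0 A.

Lemma Bq_bil A : isbil (Bq A).
Proof.
split=> w.
- apply: lin_sub; first exact: (proj1 (BGa_bil A)).
  apply: lin_mulc; apply: lin_scale; exact: Q1_lin.
- apply: lin_sub; first exact: (proj2 (BGa_bil A)).
  apply: lin_scale; exact: lin_coord.
Qed.

Lemma H_eq A (y : V) : y != 0 ->
  geod F A x y - ((1 + n).+1%:R)^-1 * (\sum_E pd (inr E) (geod F E) x y) * y 0 A = Bq A y y.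
Proof.
move=> y0; rewrite S_E // geodE' // /Bq.
field; apply: lt0r_neq0; have := ler0n R n; lra.
Qed.

End Doug.

Section G.
Variables (R : realType) (n : nat) (h : R -> R) (rho : R) (g : R -> R) (eps : R).
Hypothesis rho_gt0 : 0 < rho.
Hypothesis eps_gt0 : 0 < eps.
Hypothesis hg : forall r, 0 <= r < rho -> g r = h r.
Hypothesis gder : forall r, -eps < r < rho -> derivable g r 1.
Local Notation V := 'rV[R]_(1 + n).
Local Notation ev := (evec R).
Local Notation U := (cyl_domain n rho).
Local Notation F := (Fex h).
Variable x : V.
Hypothesis hx : U x.
Hypothesis hpos : forall y, y != 0 -> posdef (fund_g F x y).
Local Notation Bq := (Bq R n x).

Lemma douglas0 A B C D (y : V) : y != 0 -> douglas F A B C D x y = 0.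
Proof.
move=> y0; rewrite /douglas.
transitivity (pd (inr B) (pd (inr C) (pd (inr D) (fun _ y => Bq A y y))) x y).
  apply: (pd_near _ _ x y B y0) => y1 y10.
  apply: (pd_near _ _ x y1 C y10) => y2 y20.
  apply: (pd_near _ _ x y2 D y20) => y3 y30.
  exact: (H_eq R n h rho g eps rho_gt0 eps_gt0 hg gder x hx hpos A y3 y30).
have E1 : pd (inr D) (fun _ y => Bq A y y) = fun _ y => Bq A y (ev D) + Bq A (ev D) y.
  apply/funext => x'; apply/funext => y'; apply: dval; exact (D_bil _ _ _ _ _ (Bq_bil R n x A)).
rewrite E1.
have E2 : pd (inr C) (fun _ y => Bq A y (ev D) + Bq A (ev D) y)
    = fun _ _ => Bq A (ev C) (ev D) + Bq A (ev D) (ev C).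
  apply/funext=> x'; apply/funext => y'; apply: dval.
  exact (D_lin _ _ _ _ _ (lin_add _ _ _ _ (proj1 (Bq_bil R n x A) (ev D)) (proj2 (Bq_bil R n x A) (ev D)))).
rewrite E2; apply: dval; exact: dC.
Qed.
End G.

Local Close Scope classical_set_scope.

Theorem mainTheorem8 (R : realType) (n : nat) (rho : R) (h : R -> R) :
  (3 <= n)%N -> 0 < rho -> smooth_Ico h rho ->
  Finsler_on (cyl_domain n rho) (Fex h) ->
  cyl_sym (cyl_domain n rho) (Fex h) /\
  (forall x y : 'rV[R]_(1 + n), cyl_domain n rho x -> y != 0 ->
     forall A B C D : 'I_(1 + n), douglas (Fex h) A B C D x y = 0).
Proof.
move=> _ rho0 [g [e [e0 hgh hder]]] [_ _ _ hpos].
split; first exact: cyl_Fex.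
move=> x y hx y0 A B C D.
apply: (douglas0 R n h rho g e rho0 e0 hgh _ x hx _ A B C D y y0).
- by move=> r hr; exact: (hder 0%N r hr).
- by move=> y' y'0; exact: hpos.
Qed.
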